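(* For all $n\geq1$ and $i,j\in I$ one has $C^{(n)}_{-i,-j}=(-1)^{n-1}C^{(n)}_{ij}$. Moreover, for every $n\geq 1$ the element $c_n=\sum_{i\in I}C^{(n)}_{ii}$ is even and lies in the center of $U(\mathfrak{q}(N))$ (it commutes with every element of $U(\mathfrak{q}(N))$), and $c_n=0$ whenever $n$ is even.
   Context: Let $N\geq1$ and let $I=\{-N,\dots,-1,1,\dots,N\}$; all indices below range over $I$ unless stated otherwise. For $k\in I$ put $\bar k=0$ if $k>0$ and $\bar k=1$ if $k<0$. The Lie superalgebra $\mathfrak{q}(N)$ over $\mathbb{C}$ is the subalgebra of $\mathfrak{gl}(N|N)$ (with standard basis $E_{ij}$, $i,j\in I$, $E_{ij}$ of parity $\bar\imath+\bar\jmath$) spanned by $F_{ij}=E_{ij}+E_{-i,-j}$; thus $F_{-i,-j}=F_{ij}$, the $2N^2$ elements $F_{ij}$ with $i>0$ form a basis, $F_{ij}$ has parity $\bar\imath+\bar\jmath \bmod 2$, and $$[F_{ij}, F_{kl}] = \delta_{kj} F_{il} - (-1)^{(\bar{\imath}+ \bar{\jmath})(\bar{k} + \bar{l})} \delta_{il} F_{kj} + \delta_{k,-j} F_{-i,l} - (-1)^{(\bar{\imath} + \bar{\jmath})(\bar{k} + \bar{l})} \delta_{-i,l} F_{k,-j}.$$ For $n\geq1$ define elements of $U(\mathfrak{q}(N))$ by $$C^{(n)}_{ij} = \sum_{k_1,\ldots,k_{n-1}\in I}F_{ik_1} (-1)^{\bar{k}_1} F_{k_1k_2} (-1)^{\bar{k}_2}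 \cdots F_{k_{n-2}k_{n-1}} (-1)^{\bar{k}_{n-1}} F_{k_{n-1}j}$$ (so $C^{(1)}_{ij}=F_{ij}$), and $c_n=\sum_{i\in I}C^{(n)}_{ii}$. *)

(* Defs.v *)
From HB Require Import structures.
From mathcomp Require Import all_boot all_order all_algebra.
Set Implicit Arguments. Unset Strict Implicit. Unset Printing Implicit Defensive.
Import Order.TTheory GRing.Theory Num.Theory.
Local Open Scope ring_scope.

(* The index set I = {-N,...,-1,1,...,N}: (false, k) encodes k+1 > 0 and
   (true, k) encodes -(k+1) < 0, for k : 'I_N. *)
Definition idx (N : nat) := (bool * 'I_N)%type.

Definition negi N (i : idx N) : idx N := (~~ i.1, i.2).

Definition bar N (i : idx N) : bool := i.1.

Definition par N (i j : idx N) : bool := bar i (+) bar j.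

Definition qN_rel N (R : pzRingType) (A : lalgType R) (f : idx N -> idx N -> A) :=
  (forall i j, f (negi i) (negi j) = f i j) /\
  (forall i j k l,
     f i j * f k l - (-1) ^+ (par i j && par k l) * (f k l * f i j) =
       (k == j)%:R * f i l
     - (-1) ^+ (par i j && par k l) * ((i == l)%:R * f k j)
     + (k == negi j)%:R * f (negi i) l
     - (-1) ^+ (par i j && par k l) * ((negi i == l)%:R * f k (negi j))).

(* Cm f m i j = C^{(m+1)}_{ij} *)
Fixpoint Cm N (A : pzRingType) (f : idx N -> idx N -> A) (m : nat) (i j : idx N) : A :=
  match m with
  | 0 => f i j
  | m'.+1 => \sum_(k : idx N) f i k * ((-1) ^+ bar k * Cm f m' k j)
  end.

(* C^{(n)}_{ij}, meaningful for n >= 1 *)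
Definition Cn N (A : pzRingType) (f : idx N -> idx N -> A) (n : nat) (i j : idx N) : A :=
  Cm f n.-1 i j.

Definition cn N (A : pzRingType) (f : idx N -> idx N -> A) (n : nat) : A :=
  \sum_(i : idx N) Cn f n i i.

(* Main.v *)
Require Import Defs.
From HB Require Import structures.
From mathcomp Require Import all_boot all_order all_algebra.
Import Order.TTheory GRing.Theory Num.Theory.
Set Implicit Arguments. Unset Strict Implicit. Unset Printing Implicit Defensive.
Local Open Scope ring_scope.

Lemma negiK N : involutive (@negi N).
Proof. by case=> b x; rewrite /negi /= negbK. Qed.

Lemma negi_inj N : injective (@negi N).
Proof. exact: inv_inj (@negiK N). Qed.

Lemma bar_negi N (i : idx N) : bar (negi i) = ~~ bar i.
Proof. by []. Qed.

Lemma eq_negi N (k a : idx N) : (k == negi a) = (a == negi k).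
Proof. by apply/eqP/eqP => ->; rewrite negiK. Qed.

Lemma sgCA (R : pzRingType) (x y : R) n : x * ((-1) ^+ n * y) = (-1) ^+ n * (x * y).
Proof. by rewrite mulrA commr_sign -mulrA. Qed.

Lemma sgC (R : pzRingType) (x : R) n : x * (-1) ^+ n = (-1) ^+ n * x.
Proof. exact: commr_sign. Qed.

Lemma natCA (R : pzRingType) (x y : R) n : x * (n%:R * y) = n%:R * (x * y).
Proof. by rewrite mulrA (commr_nat x) -mulrA. Qed.

Lemma sum_delta N (R : pzRingType) (G : idx N -> R) l :
  \sum_a (a == l)%:R * G a = G l.
Proof.
rewrite (bigD1 l) //= eqxx mul1r big1 ?addr0 // => a /negPf ->.
by rewrite mul0r.
Qed.

Lemma parE N (i a j : idx N) q :
  (par i j && q) = (par i a && q) (+) (par a j && q).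
Proof. by rewrite /par; case: (bar i); case: (bar a); case: (bar j); case: q. Qed.

Lemma Cm_neg N (A : pzRingType) (f : idx N -> idx N -> A)
  (hf1 : forall i j, f (negi i) (negi j) = f i j) m i j :
  Cm f m (negi i) (negi j) = (-1) ^+ m * Cm f m i j.
Proof.
elim: m i j => [|m IH] i j /=; first by rewrite hf1 expr0 mul1r.
rewrite (reindex_inj (@negi_inj N)) mulr_sumr; apply: eq_bigr => k _.
rewrite hf1 IH bar_negi signrN exprS.
rewrite !(mulNr, mulrN, mulN1r). congr (- _).
by rewrite mul1r !(sgCA (f i k)) (sgCA ((-1) ^+ bar k)).
Qed.

Lemma ptA (R: pzRingType) (x c F: R) (b s1 s2 : bool) :
 x * ((-1)^+b * c) * F - (-1)^+(s1 (+) s2) * (F * (x * ((-1)^+b * c))) =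
 x * ((-1)^+b * (c * F - (-1)^+s2 * (F * c))) + (-1)^+s2 * ((-1)^+b * ((x * F - (-1)^+s1 * (F * x)) * c)).
Proof.
rewrite (sgCA x) (sgCA F) -!mulrA.
set P := x * (c * F). set Q := x * (F * c). set S := F * (x * c).
have -> : x * ((-1) ^+ b * (c * F - (-1) ^+ s2 * (F * c))) =
   (-1)^+b * P - (-1)^+b * ((-1)^+s2 * Q).
  by rewrite sgCA mulrBr mulrBr sgCA.
have -> : (-1) ^+ s2 * ((-1) ^+ b * ((x * F - (-1) ^+ s1 * (F * x)) * c)) =
   (-1)^+b * ((-1)^+s2 * Q) - (-1)^+ (s1 (+) s2) * ((-1)^+b * S).
  rewrite mulrBl mulrBr mulrBr -!mulrA.
  rewrite -/Q -/S (sgCA ((-1)^+s2)); congr (_ - _).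
  by rewrite (sgCA ((-1)^+b)) (sgCA ((-1)^+s2)) signr_addb -mulrA.
by rewrite addrA subrK.
Qed.

Lemma addAC8 (V : zmodType) (a b c d W Z : V) :
  a - W + (b - Z) + (W - c + Z - d) = a - c + (b - d).
Proof.
rewrite -(addrA (W - c)) (addrC W) -(addrA (-c)) addrACA.
by rewrite (addrAC a) (addrCA (b - Z)) (addrA (b - Z)) subrK addrA subrK.
Qed.

Lemma Cm_comm (K : fieldType) N (A : algType K) (f : idx N -> idx N -> A)
  (hf : qN_rel f) m i j k l :
  Cm f m i j * f k l - (-1) ^+ (par i j && par k l) * (f k l * Cm f m i j) =
  (k == j)%:R * Cm f m i l - (-1) ^+ (par i j && par k l) * ((i == l)%:R * Cm f m k j)
  + (-1) ^+ m * ((k == negi j)%:R * Cm f m (negi i) l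
     - (-1) ^+ (par i j && par k l) * ((negi i == l)%:R * Cm f m k (negi j))).
Proof.
case: hf => hf1 hf2.
elim: m i j => [|m IH] i j.
  by rewrite /= hf2 expr0 mul1r addrA.
set q := par k l.
set F := f k l.
transitivity (\sum_a (f i a * ((-1)^+ bar a * (Cm f m a j * F - (-1)^+ (par a j && q) * (F * Cm f m a j)))
   + (-1)^+ (par a j && q) * ((-1)^+ bar a * ((f i a * F - (-1)^+ (par i a && q) * (F * f i a)) * Cm f m a j)))).
  rewrite /= mulr_suml mulr_sumr mulr_sumr -sumrB; apply: eq_bigr => a _.
  by rewrite (parE i a j) ptA.
under eq_bigr => a _ do rewrite IH hf2.
rewrite big_split /=.
rewrite -/q.
have HU : \sum_a f i a * ((-1)^+bar a * ((k==j)%:R * Cm f m a l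
     - (-1)^+(par a j && q) * ((a==l)%:R * Cm f m k j)
     + (-1)^+m * ((k==negi j)%:R * Cm f m (negi a) l
     - (-1)^+(par a j && q)*((negi a == l)%:R * Cm f m k (negi j))))) =
  (k==j)%:R * Cm f m.+1 i l
  - f i l * ((-1)^+bar l * ((-1)^+(par l j && q) * Cm f m k j))
  + ((-1)^+m.+1 * ((k == negi j)%:R * Cm f m.+1 (negi i) l)
  - (-1)^+m * (f (negi i) l * ((-1)^+ bar (negi l) * ((-1)^+(par (negi l) j && q) * Cm f m k (negi j))))).
  under eq_bigr => a _ do rewrite !(mulrDr, mulrN).
  rewrite !big_split /= !sumrN.
  congr (_ - _ + (_ - _)).
  - by rewrite mulr_sumr; apply: eq_bigr => a _; rewrite !natCA.
  - rewrite -(sum_delta (fun a => f i a * ((-1) ^+ bar a * ((-1) ^+ (par a j && q) * Cm f m k j)))).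
    by apply: eq_bigr => a _; rewrite !natCA.
  - transitivity ((k == negi j)%:R * Cm f m.+1 i (negi l)).
      rewrite [in RHS]/= mulr_sumr; apply: eq_bigr => a _.
      rewrite -{1}(negiK l) (Cm_neg hf1) !natCA; congr (_ * _).
      by rewrite (sgCA ((-1) ^+ bar a)) (sgCA (f i a)) (sgCA ((-1) ^+ bar a)) (sgCA (f i a)) signrMK.
    by rewrite -[in LHS](negiK i) (Cm_neg hf1) sgCA.
  - have -> : f (negi i) l = f i (negi l) by rewrite -hf1 negiK.
    rewrite -(sum_delta (fun a => (-1) ^+ m * (f i a * ((-1) ^+ bar a * ((-1) ^+ (par a j && q) * Cm f m k (negi j)))))).
    apply: eq_bigr => a _; rewrite eq_sym eq_negi !natCA.
    by rewrite (sgCA ((-1) ^+ bar a)) (sgCA (f i a)).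
have HV : \sum_a (-1)^+(par a j && q) * ((-1)^+bar a * (((k == a)%:R * f i l
     - (-1)^+(par i a && q) * ((i == l)%:R * f k a) + (k == negi a)%:R * f (negi i) l
     - (-1)^+(par i a && q) * ((negi i == l)%:R * f k (negi a))) * Cm f m a j)) =
  (-1)^+(par k j && q) * ((-1)^+bar k * (f i l * Cm f m k j))
  - (-1)^+(par i j && q) * ((i == l)%:R * Cm f m.+1 k j)
  + (-1)^+(par (negi k) j && q) * ((-1)^+bar (negi k) * (f (negi i) l * Cm f m (negi k) j))
  - (-1)^+m.+1 * ((-1)^+(par i j && q) * ((negi i == l)%:R * Cm f m.+1 k (negi j))).
  under eq_bigr => a _ do rewrite !(mulrDl, mulNr, mulrDr, mulrN).
  rewrite !big_split /= !sumrN.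
  congr (_ - _ + _ - _).
  - rewrite -(sum_delta (fun a => (-1)^+(par a j && q) * ((-1)^+bar a * (f i l * Cm f m a j)))).
    by apply: eq_bigr => a _; rewrite -mulrA !natCA eq_sym.
  - rewrite [in RHS]/= !mulr_sumr; apply: eq_bigr => a _.
    rewrite -!mulrA !natCA; congr (_ * _).
    rewrite (sgCA (f k a)) (sgCA ((-1) ^+ bar a)) (mulrA ((-1) ^+ (par a j && q))) -signr_addb.
    by rewrite (parE i a j) addbC.
  - rewrite -(sum_delta (fun a => (-1)^+(par a j && q) * ((-1)^+bar a * (f (negi i) l * Cm f m a j)))).
    by apply: eq_bigr => a _; rewrite -mulrA !natCA eq_negi.
  - transitivity ((negi i == l)%:R * ((-1)^+(par i j && q) * Cm f m.+1 (negi k) j)).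
      rewrite [in RHS]/= !mulr_sumr; apply: eq_bigr => a _.
      rewrite -!mulrA !natCA; congr (_ * _).
      rewrite -(hf1 k (negi a)) negiK.
      rewrite (sgCA (f (negi k) a)) (sgCA ((-1) ^+ bar a)) (mulrA ((-1) ^+ (par a j && q))) -signr_addb.
      by rewrite (parE i a j) addbC.
    have -> : Cm f m.+1 (negi k) j = (-1)^+m.+1 * Cm f m.+1 k (negi j).
      by rewrite -{1}(negiK j) (Cm_neg hf1).
    rewrite (sgCA ((-1)^+(par i j && q))) (sgCA ((negi i == l)%:R)); congr (_ * _).
    by rewrite natCA.
have W : f i l * ((-1)^+bar l * ((-1)^+(par l j && q) * Cm f m k j)) =
   (-1)^+(par k j && q) * ((-1)^+bar k * (f i l * Cm f m k j)).
  rewrite !(sgCA (f i l)) !mulrA -!signr_addb; congr (_ ^+ _ * _ * _).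
  by rewrite /q /par; case: (bar i); case: (bar j); case: (bar k); case: (bar l).
have Z : (-1)^+m * (f (negi i) l * ((-1)^+ bar (negi l) * ((-1)^+(par (negi l) j && q) * Cm f m k (negi j)))) =
   (-1)^+(par (negi k) j && q) * ((-1)^+bar (negi k) * (f (negi i) l * Cm f m (negi k) j)).
  have -> : Cm f m (negi k) j = (-1)^+m * Cm f m k (negi j).
    by rewrite -{1}(negiK j) (Cm_neg hf1).
  rewrite !(sgCA (f (negi i) l)) !mulrA -(signr_odd _ m) -!signr_addb; congr (_ ^+ _ * _ * _).
  rewrite /q /par !bar_negi.
  by case: (bar i); case: (bar j); case: (bar k); case: (bar l); case: (odd m).
rewrite HU HV W Z addAC8 mulrBr.
reflexivity.
Qed.

Lemma sigma_Cm N (A : pzRingType) (f : idx N -> idx N -> A) (sigma : {rmorphism A -> A})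
  (hs : forall i j : idx N, sigma (f i j) = (-1) ^+ par i j * f i j) m i j :
  sigma (Cm f m i j) = (-1) ^+ par i j * Cm f m i j.
Proof.
elim: m i j => [|m IH] i j /=; first exact: hs.
rewrite rmorph_sum mulr_sumr; apply: eq_bigr => a _.
rewrite !rmorphM rmorph_sign hs IH.
rewrite (sgCA ((-1) ^+ bar a)) -mulrA (sgCA (f i a)) (mulrA ((-1) ^+ par i a)) -signr_addb.
by rewrite /par; case: (bar i); case: (bar a); case: (bar j).
Qed.

Unset Implicit Arguments.

Theorem mainTheorem2 (K : fieldType) (charK : [pchar K] =i pred0)
    (N : nat) (hN : (0 < N)%N)
    (A : algType K) (f : idx N -> idx N -> A) (hf : qN_rel f) :
  (forall (n : nat) (i j : idx N), (0 < n)%N ->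
     Cn f n (negi i) (negi j) = (-1) ^+ n.-1 * Cn f n i j)
  /\ (forall sigma : {rmorphism A -> A},
        (forall i j : idx N, sigma (f i j) = (-1) ^+ par i j * f i j) ->
        forall n : nat, (0 < n)%N -> sigma (cn f n) = cn f n)
  /\ (forall (n : nat) (k l : idx N), (0 < n)%N ->
        cn f n * f k l = f k l * cn f n)
  /\ (forall n : nat, (0 < n)%N -> ~~ odd n -> cn f n = 0).
Proof.
have hf1 := hf.1.
split; first by move=> n i j _; rewrite /Cn (Cm_neg hf1).
split.
  move=> sigma hs n _; rewrite /cn rmorph_sum; apply: eq_bigr => i _.
  by rewrite /Cn (sigma_Cm hs) /par addbb expr0 mul1r.
split.
  move=> n k l _; apply/eqP; rewrite -subr_eq0; apply/eqP.
  rewrite /cn /Cn mulr_suml mulr_sumr -sumrB.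
  set m := n.-1.
  have E : forall i, Cm f m i i * f k l - f k l * Cm f m i i =
     (i == k)%:R * Cm f m i l - (i == l)%:R * Cm f m k i
     + ((i == negi k)%:R * ((-1) ^+ m * Cm f m (negi i) l)
        - (i == negi l)%:R * ((-1) ^+ m * Cm f m k (negi i))).
    move=> i; have := Cm_comm hf m i i k l.
    rewrite /par addbb /= expr0 !mul1r => ->.
    rewrite (eq_sym k i) (eq_negi k i) mulrBr (eq_sym (negi i) l) (eq_negi l i).
    by rewrite (sgCA ((i == negi k)%:R)) (sgCA ((i == negi l)%:R)).
  under eq_bigr => i _ do rewrite E.
  rewrite !big_split /= !sumrN !sum_delta !negiK.
  by rewrite !subrr addr0.
move=> n n0 ev.
have H : cn f n = - cn f n.
  rewrite {1}/cn (reindex_inj (@negi_inj N)) /=.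
  under eq_bigr => i _ do rewrite /Cn (Cm_neg hf1).
  rewrite -mulr_sumr.
  have -> : (-1) ^+ n.-1 = -1 :> A.
    case: n n0 ev => // n' _ /=; rewrite negbK => ev.
    by rewrite -signr_odd ev expr1.
  by rewrite mulN1r.
have h2 : cn f n *+ 2 = 0 by rewrite mulr2n {1}H addNr.
have c2 : (2%:R : K) != 0.
  by have := charK 2; rewrite !inE /= => /negbT.
by rewrite -[cn f n](scale1r) -(mulVf c2) -scalerA scaler_nat h2 scaler0.
Qed.
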